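(* For positive integers $m,M$ let $$S_M(m)=\sum_{r=0}^M\left(-\frac14\right)^r\frac{(2m+2r-1)!}{r!\,(m+r-1)!}\binom{m-1+M}{m-1+r}.$$ Then $$S_M(1)=\frac{(2\cdot1-3)(2\cdot2-3)\cdots(2M-3)}{M!\,2^M},\qquad S_M(m)=\frac{(2m-1)!}{(m-1)!}S_M(1),$$ and in particular $S_M(m)\neq0$ for all positive integers $m,M$. *)

(* Defs.v *)
From mathcomp Require Import all_boot all_order all_algebra.
Set Implicit Arguments. Unset Strict Implicit. Unset Printing Implicit Defensive.
Import Order.TTheory GRing.Theory Num.Theory.
Local Open Scope ring_scope.

Definition S (M m : nat) : rat :=
  \sum_(0 <= r < M.+1)
    (- (1 / 4%:R)) ^+ r
    * (((2 * m + 2 * r - 1)`!)%:R / ((r`!)%:R * ((m + r - 1)`!)%:R))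
    * ('C(m - 1 + M, m - 1 + r))%:R.

Definition oddprod (M : nat) : rat :=
  \prod_(1 <= k < M.+1) ((2 * k)%:R - 3%:R).

(* Main.v *)
Require Import Defs.
From mathcomp Require Import all_boot all_order all_algebra.
From mathcomp Require Import ring lra zify.
Import Order.TTheory GRing.Theory Num.Theory.
Local Open Scope ring_scope.

Definition u (a : rat) (r : nat) : rat := \prod_(i < r) (- (a + i%:R) / (i.+1)%:R).
Definition G (a : rat) (n M : nat) : rat := \sum_(i < M.+1) u a i * ('C(n, M - i))%:R.

Lemma u0 a : u a 0 = 1.
Proof. by rewrite /u big_ord0. Qed.

Lemma uS a r : u a r.+1 = u a r * (- (a + r%:R) / (r.+1)%:R).
Proof. by rewrite /u big_ord_recr. Qed.

Lemma nz (n : nat) : (n.+1%:R : rat) != 0.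
Proof. by rewrite pnatr_eq0. Qed.

Lemma u_shift a r : u a r.+1 = u (a+1) r * (-a) / (r.+1)%:R.
Proof.
elim: r => [|r IH]; first by rewrite uS !u0 addr0 !mul1r.
rewrite uS IH uS -[r.+2%:R]natr1 -[r.+1%:R]natr1.
have h1 := nz r. have h2 := nz r.+1. rewrite -!natr1 in h1 h2.
field. by rewrite h1 h2.
Qed.

Lemma u_pascal a r : u a r.+1 = u (a+1) r.+1 + u (a+1) r.
Proof.
rewrite u_shift uS. have h1 := nz r. rewrite -natr1 in h1 *.
field. by rewrite h1.
Qed.

Lemma G0 a n : G a n 0 = 1.
Proof. by rewrite /G big_ord1 u0 subnn bin0 mul1r. Qed.

Lemma G_rec a n M : G a n M.+1 = G (a+1) n M.+1 + G (a+1) n M.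
Proof.
rewrite /G big_ord_recl [in X in _ = X + _]big_ord_recl !u0.
under eq_bigr => i _ do rewrite lift0 subSS u_pascal mulrDl.
under [in X in _ = X + _]eq_bigr => i _ do rewrite lift0 subSS.
rewrite big_split /= subn0. rewrite -!addrA. congr (_ + _).
Qed.

Lemma G_shift a n M : G (a+1) n.+1 M = G a n M.
Proof.
case: M => [|M]; first by rewrite !G0.
rewrite (G_rec a) /G big_ord_recr /= subnn bin0 mulr1.
rewrite [in X in _ = X + _]big_ord_recr /= subnn bin0 mulr1.
under eq_bigr => i _ do rewrite subSn ?leq_ord // binS natrD mulrDr.
under [in X in _ = X + _]eq_bigr => i _ do rewrite subSn ?leq_ord //.
rewrite big_split /=. ring.
Qed.

Lemma G_base a n M : G (a + n%:R) n M = u a M.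
Proof.
elim: n a => [|n IH] a.
  rewrite addr0 /G big_ord_recr /= subnn bin0 mulr1 big1 ?add0r // => i _.
  by rewrite bin0n subn_eq0 leqNgt ltn_ord /= mulr0.
have -> : a + n.+1%:R = (a + n%:R) + 1 by rewrite -natr1 addrA.
by rewrite G_shift IH.
Qed.

Lemma fnz n : ((n`!)%:R : rat) != 0.
Proof. by rewrite pnatr_eq0 -lt0n fact_gt0. Qed.

Lemma term k r :
  (- (1 / 4%:R)) ^+ r * (((2 * k + 2 * r + 1)`!)%:R / ((r`!)%:R * ((k + r)`!)%:R))
  = ((2 * k + 1)`!)%:R / ((k`!)%:R) * u (k%:R + 3%:R / 2%:R) r :> rat.
Proof.
elim: r => [|r IH].
  by rewrite expr0 u0 muln0 !addn0 fact0 mul1r mulr1; congr (_ / _); exact: mul1r.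
have -> : (2 * k + 2 * r.+1 + 1 = (2 * k + 2 * r + 1).+2)%N by lia.
have -> : (k + r.+1 = (k + r).+1)%N by lia.
rewrite uS [RHS]mulrA -IH !factS !natrM exprS.
have h1 := fnz (2 * k + 2 * r + 1). have h2 := fnz r. have h3 := fnz (k + r).
have h4 := nz r. have h5 := nz (k + r).
rewrite -!natr1 ?natrD ?natrM in h4 h5; rewrite -!natr1 ?natrD ?natrM.
field. by rewrite h2 h3 h4 h5.
Qed.

Lemma S_G k M : S M k.+1 =
  ((2 * k + 1)`!)%:R / ((k`!)%:R) * G (k%:R + 3%:R / 2%:R) (k + M) M.
Proof.
rewrite /S /G big_mkord mulr_sumr; apply: eq_bigr => i _.
have hi : (i <= M)%N by rewrite -ltnS ltn_ord.
have -> : (2 * k.+1 + 2 * i - 1 = 2 * k + 2 * i + 1)%N by lia.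
have -> : (k.+1 + i - 1 = k + i)%N by lia.
have -> : (k.+1 - 1 = k)%N by lia.
rewrite term mulrA; congr (_ * _%:R).
rewrite -bin_sub; last by lia.
congr 'C(_, _); lia.
Qed.

Lemma u_fact b M : u b M * (M`!)%:R = \prod_(i < M) (- (b + i%:R)).
Proof.
elim: M => [|M IH]; first by rewrite u0 big_ord0 mulr1.
rewrite uS big_ord_recr /= -IH factS natrM.
have h := nz M. field. by rewrite nat1r.
Qed.

Lemma S1 M : S M 1 = oddprod M / ((M`!)%:R * 2%:R ^+ M).
Proof.
rewrite S_G muln0 add0n fact0 divr1 mul1r.
have -> : (0%:R + 3%:R / 2%:R : rat) = (3%:R / 2%:R - M%:R) + M%:R by rewrite add0r subrK.
rewrite G_base.
have hf := fnz M. have h2 : (2%:R ^+ M : rat) != 0 by rewrite expf_neq0 // pnatr_eq0.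
apply: (canRL (mulrK _)); first by rewrite unitfE mulf_neq0.
rewrite mulrA u_fact /oddprod big_rev_mkord subn1 /=.
rewrite -[in X in _ * X = _](card_ord M) -prodr_const -big_split /=.
apply: eq_bigr => i _.
have hi : (i <= M)%N by apply: ltnW.
rewrite subSS natrM natrB //. by field.
Qed.

Lemma Sm_eq k M : S M k.+1 = ((2 * k + 1)`!)%:R / ((k`!)%:R) * S M 1.
Proof.
rewrite !S_G muln0 add0n fact0 divr1 mul1r add0n.
have -> : (k%:R + 3%:R / 2%:R : rat) = (3%:R / 2%:R - M%:R) + (k + M)%:R.
  by rewrite natrD; ring.
have -> : (0%:R + 3%:R / 2%:R : rat) = (3%:R / 2%:R - M%:R) + M%:R by ring.
by rewrite !G_base.
Qed.

Lemma oddprod_neq0 M : oddprod M != 0.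
Proof.
rewrite /oddprod prodf_seq_neq0; apply/allP => k _ /=.
rewrite subr_eq0 eqr_nat; apply/negP => /eqP h.
have := congr1 odd h. by rewrite oddM.
Qed.

Theorem lemma5 (m M : nat) (hm : (0 < m)%N) (hM : (0 < M)%N) :
  [/\ S M 1 = oddprod M / ((M`!)%:R * 2%:R ^+ M),
      S M m = ((2 * m - 1)`!)%:R / ((m - 1)`!)%:R * S M 1
    & S M m != 0].
Proof.
case: m hm => [//|k] _.
have -> : (2 * k.+1 - 1 = 2 * k + 1)%N by lia.
have -> : (k.+1 - 1 = k)%N by lia.
split; [exact: S1 | exact: Sm_eq |].
rewrite Sm_eq S1 !mulf_neq0 ?invr_neq0 ?fnz ?oddprod_neq0 //.
  by rewrite mulf_neq0 ?fnz // expf_neq0 // pnatr_eq0.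
Qed.
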